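(* Let $U\in\Omega$, $\alpha>0$, and suppose $\langle\nabla f(U),U\rangle<0$. Then $$\Pi_\Omega(U-\alpha\nabla f(U))=\Pi_{\mathcal C(\Omega)}(U-\alpha\nabla f(U)),$$ where $\mathcal C(\Omega)$ is the convex hull of $\Omega$.
   Context: $A\in\mathbb R^{n\times n}$ symmetric, $y\in\mathbb R^n$, $L\in\mathbb R$, $\beta>0$, integers $r,K\ge1$. $f(U)=\langle L I_n+A,UU^T\rangle+\langle y,UU^T\mathbf 1_n-\mathbf 1_n\rangle+\frac\beta2\|UU^T\mathbf 1_n-\mathbf 1_n\|_2^2$ for $U\in\mathbb R^{n\times r}$. $\Omega=\{U\in\mathbb R^{n\times r}:\|U\|_F^2=K,\ U\ge0\text{ entrywise}\}$. $\Pi_S$ denotes Euclidean (Frobenius) projection onto a set $S$; in particular $\Pi_\Omega(V)=\sqrt K(V)_+/\|(V)_+\|_F$ with $(V)_+=\max\{V,0\}$ entrywise. *)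

(* Defs.v *)
From HB Require Import structures.
From mathcomp Require Import all_boot all_order all_algebra.
From mathcomp Require Import all_classical all_reals all_analysis.
Set Implicit Arguments. Unset Strict Implicit. Unset Printing Implicit Defensive.
Import Order.TTheory GRing.Theory Num.Theory.
Import numFieldNormedType.Exports.
Local Open Scope classical_set_scope.
Local Open Scope ring_scope.

Definition frob (R : realType) (m k : nat) (X Y : 'M[R]_(m, k)) : R :=
  \sum_(i < m) \sum_(j < k) X i j * Y i j.

Definition ones (R : realType) (n : nat) : 'cV[R]_n := const_mx 1.

Definition fobj (R : realType) (n r : nat) (A : 'M[R]_n) (y : 'cV[R]_n)
    (L beta : R) (U : 'M[R]_(n, r)) : R :=
  let w := U *m U^T *m ones R n - ones R n in
  frob (L%:M + A) (U *m U^T) + frob y w + beta / 2 * frob w w.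

(* G is the (Euclidean/Frobenius) gradient of g at U:
   for every direction D, t |-> g(U + t D) has derivative <G, D> at t = 0. *)
Definition is_gradient (R : realType) (n r : nat) (g : 'M[R]_(n, r) -> R)
    (U G : 'M[R]_(n, r)) : Prop :=
  forall D : 'M[R]_(n, r),
    is_derive (0 : R) (1 : R) (fun t : R => g (U + t *: D)) (frob G D).

Definition Omega (R : realType) (n r K : nat) : set 'M[R]_(n, r) :=
  [set U | frob U U = K%:R /\ forall i j, 0 <= U i j].

Definition convhull (R : realType) (n r : nat) (S : set 'M[R]_(n, r))
    : set 'M[R]_(n, r) :=
  [set X | exists (k : nat) (w : 'I_k -> R) (P : 'I_k -> 'M[R]_(n, r)),
     (forall i, S (P i)) /\ (forall i, 0 <= w i) /\ \sum_(i < k) w i = 1 /\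
     X = \sum_(i < k) w i *: P i].

Definition is_proj (R : realType) (n r : nat) (S : set 'M[R]_(n, r))
    (V P : 'M[R]_(n, r)) : Prop :=
  S P /\ forall W, S W -> frob (V - P) (V - P) <= frob (V - W) (V - W).

Definition pospart (R : realType) (n r : nat) (V : 'M[R]_(n, r)) : 'M[R]_(n, r) :=
  map_mx (fun x => Num.max x 0) V.

(* closed form Pi_Omega(V) = sqrt K (V)_+ / ||(V)_+||_F *)
Definition PiOmega (R : realType) (n r K : nat) (V : 'M[R]_(n, r)) : 'M[R]_(n, r) :=
  (Num.sqrt (K%:R : R) / Num.sqrt (frob (pospart V) (pospart V))) *: pospart V.

(* Main.v *)
Require Import Defs.
From HB Require Import structures.
From mathcomp Require Import all_boot all_order all_algebra.
From mathcomp Require Import all_classical all_reals all_analysis.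
From mathcomp Require Import ring lra.
Import Order.TTheory GRing.Theory Num.Theory.
Local Open Scope classical_set_scope.
Local Open Scope ring_scope.

Section Frob.
Context {R : realType} {m k : nat}.
Implicit Types X Y Z : 'M[R]_(m, k).

Lemma frobC X Y : frob X Y = frob Y X.
Proof. by apply: eq_bigr => i _; apply: eq_bigr => j _; rewrite mulrC. Qed.

Lemma frobDl X Y Z : frob (X + Y) Z = frob X Z + frob Y Z.
Proof.
rewrite /frob -big_split; apply: eq_bigr => i _; rewrite -big_split.
by apply: eq_bigr => j _; rewrite mxE mulrDl.
Qed.

Lemma frobZl a X Y : frob (a *: X) Y = a * frob X Y.
Proof.
rewrite /frob mulr_sumr; apply: eq_bigr => i _; rewrite mulr_sumr.
by apply: eq_bigr => j _; rewrite mxE mulrA.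
Qed.

Lemma frobNl X Y : frob (- X) Y = - frob X Y.
Proof. by rewrite -scaleN1r frobZl mulN1r. Qed.

Lemma frobBl X Y Z : frob (X - Y) Z = frob X Z - frob Y Z.
Proof. by rewrite frobDl frobNl. Qed.

Lemma frobBr X Y Z : frob Z (X - Y) = frob Z X - frob Z Y.
Proof. by rewrite frobC frobBl !(frobC Z). Qed.

Lemma frobZr a X Y : frob Y (a *: X) = a * frob Y X.
Proof. by rewrite frobC frobZl frobC. Qed.

Lemma frob0l Y : frob 0 Y = 0.
Proof. by rewrite -(scale0r 0) frobZl mul0r. Qed.

Lemma frob_ge0 X : 0 <= frob X X.
Proof. by apply: sumr_ge0 => i _; apply: sumr_ge0 => j _; apply: sqr_ge0. Qed.

Lemma frob_sq X Y : frob (X - Y) (X - Y) = frob X X - 2 * frob X Y + frob Y Y.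
Proof. rewrite frobBl !frobBr (frobC Y X); ring. Qed.

Lemma frobCS s t X Y : 2 * s * t * frob X Y <= s ^+ 2 * frob X X + t ^+ 2 * frob Y Y.
Proof.
have := frob_ge0 (s *: X - t *: Y).
rewrite frob_sq !frobZl !frobZr; lra.
Qed.

Lemma frob_suml (I : Type) (r : seq I) (F : I -> 'M[R]_(m, k)) Y :
  frob (\sum_(i <- r) F i) Y = \sum_(i <- r) frob (F i) Y.
Proof.
by apply: (big_morph (fun X => frob X Y) (fun X Z => frobDl X Z Y) (frob0l Y)).
Qed.

Lemma frob_mono X Y Z : (forall i j, X i j <= Y i j) -> (forall i j, 0 <= Z i j) ->
  frob X Z <= frob Y Z.
Proof.
move=> hXY hZ; apply: ler_sum => i _; apply: ler_sum => j _.
by apply: ler_wpM2r.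
Qed.

End Frob.

Theorem lemma19 (R : realType) (n r K : nat) (A : 'M[R]_n) (y : 'cV[R]_n)
    (L beta alpha : R) (U G : 'M[R]_(n, r)) :
  A^T = A -> 0 < beta -> (1 <= r)%N -> (1 <= K)%N ->
  @Omega R n r K U ->
  is_gradient (fobj A y L beta) U G ->
  0 < alpha ->
  frob G U < 0 ->
  is_proj (@Omega R n r K) (U - alpha *: G) (PiOmega K (U - alpha *: G)) /\
  is_proj (convhull (@Omega R n r K)) (U - alpha *: G) (PiOmega K (U - alpha *: G)).
Proof.
move=> _ _ _ K1 [UU U0] _ al0 GU.
set V := U - alpha *: G.
set Vp := pospart V.
have Vpe i j : Vp i j = Num.max (V i j) 0 by rewrite mxE.
have Kpos : (0 : R) < K%:R by rewrite ltr0n.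
have VU : K%:R < frob V U.
  rewrite /V frobBl frobZl UU.
  have : 0 < alpha * - frob G U by apply: mulr_gt0; lra.
  lra.
have VpU : frob V U <= frob Vp U.
  by apply: frob_mono => // i j; rewrite Vpe le_max lexx.
have a2K : K%:R < frob Vp Vp.
  have := frobCS 1 1 Vp U; rewrite UU !expr1n !mul1r mulr1; lra.
set a2 := frob Vp Vp.
set a := Num.sqrt a2. set kk := Num.sqrt (K%:R : R).
have a0 : 0 < a2 by apply: lt_trans a2K.
have aa : a ^+ 2 = a2 by rewrite sqr_sqrtr // ltW.
have kk2 : kk ^+ 2 = K%:R by rewrite sqr_sqrtr // ltW.
have kk0 : 0 < kk by rewrite sqrtr_gt0.
have akk : kk < a by rewrite ltr_sqrt.
have VVp : frob V Vp = a2.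
  apply: eq_bigr => i _; apply: eq_bigr => j _; rewrite Vpe maxEle.
  by case: ifP => _; rewrite ?mulr0 ?mul0r.
set c := kk / a.
have ca : c * a = kk by rewrite /c divfK // gt_eqF // (lt_trans kk0).
have PE : PiOmega K V = c *: Vp by [].
have PP : frob (c *: Vp) (c *: Vp) = K%:R.
  rewrite frobZl frobZr -/a2 -aa mulrA -expr2 -exprMn ca kk2 //.
have VP : frob V (c *: Vp) = kk * a.
  by rewrite frobZr VVp -aa expr2 mulrA ca.
have POm : Omega K (c *: Vp).
  split=> // i j; rewrite mxE Vpe; apply: mulr_ge0.
    by apply: divr_ge0; apply: ltW => //; apply: (lt_trans kk0).
  by rewrite le_max lexx orbT.
have key : forall W : 'M[R]_(n, r), (forall i j, 0 <= W i j) -> frob W W <= K%:R ->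
    frob (V - c *: Vp) (V - c *: Vp) <= frob (V - W) (V - W).
  move=> W W0 WK.
  rewrite !frob_sq PP VP.
  have h1 : frob V W <= frob Vp W.
    apply: frob_mono => // i j; rewrite Vpe le_max lexx //.
  have h2 := frobCS kk a Vp W.
  rewrite -/a2 kk2 aa in h2.
  set q := frob W W in WK h2 *.
  set pw := frob Vp W in h1 h2 *.
  have h3 : 0 <= (K%:R - q) * (a - kk) by apply: mulr_ge0; lra.
  have a1 : 0 < a by apply: (lt_trans kk0).
  have h4 : kk * (2 * pw) <= kk * (2 * kk * a - K%:R + q).
    have h6 : a * (2 * kk * pw) <= a * (a * (K%:R + q)).
      by move: h2; rewrite -aa !expr2; lra.
    have h7 : 2 * kk * pw <= a * (K%:R + q).
      by rewrite -(ler_pM2l a1).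
    move: h3 h7; rewrite -kk2 !expr2; nra.
  have h8 : 2 * pw <= 2 * kk * a - K%:R + q by rewrite -(ler_pM2l kk0).
  lra.
split.
  split=> // W [WK W0]; apply: key => //; by rewrite WK.
split.
  exists 1%N, (fun _ => 1), (fun _ => c *: Vp).
  split; first by move=> _; exact: POm.
  split; first by move=> _; exact: ler01.
  by rewrite !big_ord1 scale1r.
move=> W [k0 [w [P [PO [w0 [w1 ->]]]]]].
apply: key.
  move=> i j; rewrite summxE; apply: sumr_ge0 => l _; rewrite mxE.
  by apply: mulr_ge0 => //; case: (PO l) => _ ->.
rewrite frob_suml.
have -> : K%:R = \sum_(l < k0) w l * K%:R :> R by rewrite -mulr_suml w1 mul1r.
apply: ler_sum => l _; rewrite frobZl; apply: ler_wpM2l => //.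
rewrite frobC frob_suml.
have -> : K%:R = \sum_(l < k0) w l * K%:R :> R by rewrite -mulr_suml w1 mul1r.
apply: ler_sum => l' _; rewrite frobZl; apply: ler_wpM2l => //.
have := frobCS 1 1 (P l') (P l).
case: (PO l) => -> _; case: (PO l') => -> _; rewrite !expr1n !mul1r mulr1; lra.
Qed.
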